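(* Let $\theta\ge0$ and $\omega\ge0$. For arbitrary $\varphi,f\in\mathcal P^+$, the polynomial $\varphi(\Delta_{\theta,\omega})f=\sum_{k\ge0}\frac{\varphi^{(k)}(0)}{k!}\Delta_{\theta,\omega}^kf$ also belongs to $\mathcal P^+$.
   Context: $D=d/dz$, $\Delta_{\theta,\omega}=(\theta+\omega z)D+zD^2$. $\mathcal P^+$ is the set of complex polynomials of the form $C\prod_{j=1}^m(z+\pi_j)$ with $C\in\mathbb C$, $m\in\mathbb N_0$, $\pi_j\ge0$ (i.e. polynomials all of whose zeros are real and nonpositive, including constants and the zero polynomial). *)

(* Defs.v *)
From HB Require Import structures.
From mathcomp Require Import all_boot all_order all_algebra.
From mathcomp Require Import complex.
Set Implicit Arguments. Unset Strict Implicit. Unset Printing Implicit Defensive.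
Import Order.TTheory GRing.Theory Num.Theory.
Local Open Scope ring_scope.
Local Open Scope complex_scope.

(* P^+ : polynomials C * prod_j (z + pi_j) with C complex, pi_j real >= 0
   (includes constants, for s = [::], and the zero polynomial, for C = 0). *)
Definition Pplus (R : rcfType) (p : {poly R[i]}) : Prop :=
  exists (c : R[i]) (s : seq R),
    all (fun x => 0 <= x) s /\
    p = c *: \prod_(x <- s) ('X + (x%:C)%:P).

Definition Delta (R : rcfType) (theta omega : R) (f : {poly R[i]}) : {poly R[i]} :=
  ((theta%:C)%:P + (omega%:C) *: 'X) * f^`() + 'X * f^`(2).

(* phi(Delta) f = sum_k phi^(k)(0)/k! Delta^k f ;  phi^(k)(0)/k! is the
   k-th coefficient of phi, i.e. phi^`N(k).[0]. *)
Definition phiDelta (R : rcfType) (theta omega : R) (phi f : {poly R[i]}) : {poly R[i]} :=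
  \sum_(k < size phi) (phi^`N(k)).[0] *: iter k (Delta theta omega) f.

(* Main.v *)
Require Import Defs.
From HB Require Import structures.
From mathcomp Require Import all_boot all_order all_algebra.
From mathcomp Require Import complex.
From mathcomp Require Import ring lra.
Import Order.TTheory GRing.Theory Num.Theory.
Set Implicit Arguments. Unset Strict Implicit. Unset Printing Implicit Defensive.
Local Open Scope ring_scope.
Local Open Scope complex_scope.

Section Ev.
Variable R : rcfType.
Variables (th om : R).
Local Notation D := (Delta th om).

Lemma DeltaD (f g : {poly R[i]}) : D (f + g) = D f + D g.
Proof. by rewrite /Delta derivD derivnD !mulrDr addrACA. Qed.

Lemma DeltaZ (a : R[i]) (f : {poly R[i]}) : D (a *: f) = a *: D f.
Proof. by rewrite /Delta derivZ derivnZ -!scalerAr scalerDr. Qed.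

Lemma iterD k f g : iter k D (f + g) = iter k D f + iter k D g.
Proof. by elim: k => //= k ->; rewrite DeltaD. Qed.

Lemma iterZ k a f : iter k D (a *: f) = a *: iter k D f.
Proof. by elim: k => //= k ->; rewrite DeltaZ. Qed.

Definition evn n (p f : {poly R[i]}) := \sum_(k < n) p`_k *: iter k D f.

Lemma phiDelta_evn p f : phiDelta th om p f = evn (size p) p f.
Proof.
by apply: eq_bigr => k _; rewrite horner_coef0 coef_nderivn addn0 binn mulr1n.
Qed.

Lemma evn_widen n m (p f : {poly R[i]}) : (size p <= n)%N -> (n <= m)%N -> evn n p f = evn m p f.
Proof.
move=> hp hnm; rewrite /evn (big_ord_widen m (fun k => p`_k *: iter k D f) hnm).
rewrite [RHS](bigID (fun i : 'I_m => (i < n)%N)) /= [X in _ + X]big1 ?addr0 //.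
move=> i; rewrite -leqNgt => hi; rewrite nth_default ?scale0r //.
exact: leq_trans hp hi.
Qed.

Lemma evnD n p q f : evn n (p + q) f = evn n p f + evn n q f.
Proof. by rewrite /evn -big_split; apply: eq_bigr => k _; rewrite coefD scalerDl. Qed.

Lemma evnZ n a p f : evn n (a *: p) f = a *: evn n p f.
Proof. by rewrite /evn scaler_sumr; apply: eq_bigr => k _; rewrite coefZ scalerA. Qed.

Lemma evn_fD n p f g : evn n p (f + g) = evn n p f + evn n p g.
Proof. by rewrite /evn -big_split; apply: eq_bigr => k _; rewrite iterD scalerDr. Qed.

Lemma evn_fZ n p a f : evn n p (a *: f) = a *: evn n p f.
Proof.
by rewrite /evn scaler_sumr; apply: eq_bigr => k _; rewrite iterZ !scalerA mulrC.
Qed.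

Lemma evnMX n p f : evn n.+1 (p * 'X) f = evn n p (D f).
Proof.
rewrite /evn big_ord_recl /= coefMX eqxx scale0r add0r.
by apply: eq_bigr => k _; rewrite coefMX /= add0n -iterSr iterS.
Qed.

Lemma evn1 n f : (0 < n)%N -> evn n 1 f = f.
Proof.
case: n => // n _; rewrite /evn big_ord_recl /= coef1 eqxx scale1r big1 ?addr0 //.
by move=> k _; rewrite coef1 /= scale0r.
Qed.

Definition Tp (pi : R) f := D f + (pi%:C)%C *: f.

Lemma ev_step p pi f :
  phiDelta th om (p * ('X + ((pi%:C)%C)%:P)) f = phiDelta th om p (Tp pi f).
Proof.
set n := size p.
have hs : (size (p * ('X + ((pi%:C)%C)%:P))%R <= n.+1)%N.
  by rewrite (leq_trans (size_polyMleq _ _)) // size_XaddC addnS addn1.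
rewrite phiDelta_evn (evn_widen _ (leqnn _) hs) mulrDr evnD evnMX.
rewrite mulrC mul_polyC evnZ -(evn_widen _ (leqnn n) (leqnSn n)).
by rewrite phiDelta_evn /Tp evn_fD evn_fZ.
Qed.
End Ev.

Section C.
Variable R : rcfType.
Local Notation Imc := (@complex.Im R).
Local Notation Rec := (@complex.Re R).
Implicit Types u v : R[i].
Lemma ImD u v : Imc (u + v) = Imc u + Imc v.
Proof. by case: u => a b; case: v => c d. Qed.
Lemma ImrM (r : R) u : Imc (r%:C * u) = r * Imc u.
Proof. by case: u => a b /=; rewrite mul0r addr0. Qed.
Lemma ImR (r : R) : Imc (r%:C) = 0. Proof. by []. Qed.
Lemma ImV u : Imc (u^-1) = - Imc u / (Rec u ^+ 2 + Imc u ^+ 2).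
Proof. by case: u => a b /=; rewrite mulNr. Qed.
Lemma Im_sum (s : seq R) (F : R -> R[i]) :
  Imc (\sum_(x <- s) F x) = \sum_(x <- s) Imc (F x).
Proof. elim: s => [|x s IH]; rewrite ?big_nil ?big_cons ?ImD ?IH //. Qed.

Lemma n2_gt0 u : 0 < Imc u -> 0 < Rec u ^+ 2 + Imc u ^+ 2.
Proof. by move=> h; rewrite ltr_wpDl ?sqr_ge0 ?exprn_gt0. Qed.

Lemma n2_gt0' u : Imc u < 0 -> 0 < Rec u ^+ 2 + Imc u ^+ 2.
Proof.
move=> h; rewrite ltr_wpDl ?sqr_ge0 //.
by rewrite -sqrrN exprn_gt0 // oppr_gt0.
Qed.

Lemma Im_invshift u (x : R) : 0 < Imc u -> Imc ((u + x%:C)^-1) < 0.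
Proof.
move=> h; have hI : Imc (u + x%:C) = Imc u by rewrite ImD ImR addr0.
by rewrite ImV mulNr oppr_lt0 divr_gt0 ?n2_gt0 ?hI.
Qed.

Lemma Im_invneg u : Imc u < 0 -> 0 < Imc (u^-1).
Proof. by move=> h; rewrite ImV divr_gt0 ?oppr_gt0 ?n2_gt0'. Qed.

Lemma Im_neq0 u : Imc u != 0 -> u != 0.
Proof. by apply: contraNneq => ->. Qed.

Lemma Im_zdiv u (y : R) : 0 < Imc u ->
  Imc (u * (u + y%:C)^-1) = - y * Imc ((u + y%:C)^-1).
Proof.
move=> h; have hn : u + y%:C != 0 by apply: Im_neq0; rewrite ImD ImR addr0 gt_eqF.
have -> : u * (u + y%:C)^-1 = 1 + (- y)%:C * (u + y%:C)^-1.
  by rewrite raddfN /= mulNr -{1}(addrK y%:C u) mulrBl mulfV.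
by rewrite ImD ImrM [Imc 1]/= add0r.
Qed.

Definition nn (p : {poly R[i]}) := forall k, 0 <= p`_k.
Lemma nnD p q : nn p -> nn q -> nn (p + q).
Proof. by move=> hp hq k; rewrite coefD addr_ge0. Qed.
Lemma nnM p q : nn p -> nn q -> nn (p * q).
Proof. by move=> hp hq k; rewrite coefM sumr_ge0 // => j _; rewrite mulr_ge0. Qed.
Lemma nnC (c : R[i]) : 0 <= c -> nn c%:P.
Proof. by move=> hc k; rewrite coefC; case: eqP. Qed.
Lemma nnX : nn 'X.
Proof. by move=> k; rewrite coefX; case: eqP. Qed.
Lemma nnZ c p : 0 <= c -> nn p -> nn (c *: p).
Proof. by move=> hc hp k; rewrite coefZ mulr_ge0. Qed.
Lemma nn_deriv p : nn p -> nn p^`().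
Proof. by move=> hp k; rewrite coef_deriv mulrn_wge0. Qed.
Lemma nn_prod (s : seq R) : all (fun x => 0 <= x) s ->
  nn (\prod_(x <- s) ('X + (x%:C)%:P)).
Proof.
elim: s => [|x s IH]; first by move=> _ k; rewrite big_nil coef1; case: (k == 0)%N; rewrite ?ler01.
rewrite /= big_cons => /andP [hx hs]; apply: nnM (IH hs).
by apply: nnD; [apply: nnX | apply: nnC; rewrite ler0c].
Qed.

Lemma nn_pos p z : nn p -> p != 0 -> 0 < z -> 0 < p.[z].
Proof.
move=> hp p0 hz; rewrite horner_coef.
have : (0 < size p)%N by rewrite size_poly_gt0.
case E: (size p) => [//|n] _; rewrite big_ord_recr /=.
apply: ltr_wpDl; first by apply: sumr_ge0 => i _; apply: mulr_ge0; [exact: hp | apply: exprn_ge0; exact: ltW].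
rewrite mulr_gt0 ?exprn_gt0 //.
have : p`_n = lead_coef p by rewrite lead_coefE E.
move=> ->; rewrite lt_def lead_coef_eq0 p0 /=.
by rewrite lead_coefE.
Qed.

Lemma bridge (p : {poly R[i]}) : p != 0 -> (forall z, root p z -> z <= 0) -> Pplus p.
Proof.
move=> p0 hr; have [r hp] := closed_field_poly_normal p.
have lc0 : lead_coef p != 0 by rewrite lead_coef_eq0.
have inr z : z \in r -> z <= 0.
  move=> hz; apply: hr; rewrite hp rootZ // root_prod_XsubC //.
exists (lead_coef p), (map (fun z => - Rec z) r); split.
  apply/allP => x /mapP [z hz ->]; have := inr z hz.
  by rewrite lecE => /andP [_]; rewrite oppr_ge0.
rewrite {1}hp big_map; congr (_ *: _); apply: eq_big_seq => z hz.
have := inr z hz; rewrite lecE /= => /andP [/eqP h0 _].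
case: z h0 hz => a b /= <- _.
congr ('X + _); rewrite -polyCN; congr (_%:P).
by apply/eqP; rewrite eq_complex /= oppr0 !eqxx.
Qed.

Lemma LD (s : seq R) z : (forall x, x \in s -> z + x%:C != 0) ->
  (\prod_(x <- s) ('X + (x%:C)%:P))^`().[z] =
  (\prod_(x <- s) ('X + (x%:C)%:P)).[z] * \sum_(x <- s) (z + x%:C)^-1.
Proof.
elim: s => [|x s IH] hs; first by rewrite !big_nil -polyC1 derivC horner0 mulr0.
rewrite !big_cons derivM derivD derivX derivC addr0 mul1r !hornerE.
rewrite IH; last by move=> y hy; apply: hs; rewrite inE hy orbT.
have hx : z + x%:C != 0 by apply: hs; rewrite inE eqxx.
set P := (\prod_(_ <- _) _).[z]; set S := \sum_(_ <- _) _.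
by field.
Qed.
End C.

Section Core.
Variable R : rcfType.
Local Notation Imc := (@complex.Im R).
Local Notation Rec := (@complex.Re R).

Definition rc (p : {poly R[i]}) := map_poly conjc p = p.

Lemma rc_prod (s : seq R) : rc (\prod_(x <- s) ('X + (x%:C)%:P)).
Proof.
rewrite /rc rmorph_prod; apply: eq_bigr => x _.
by rewrite rmorphD /= map_polyX map_polyC /= oppr0.
Qed.

Lemma rc_deriv p : rc p -> rc p^`().
Proof. by rewrite /rc => h; rewrite -deriv_map h. Qed.

Lemma nonpos_roots (p : {poly R[i]}) : p != 0 -> rc p -> nn p ->
  (forall w, 0 < Imc w -> ~~ root p w) -> forall w, root p w -> w <= 0.
Proof.
move=> p0 hrc hnn hup w hw.
case: (ltgtP (Imc w) 0) => hI.
- have hr : root p w^* by rewrite -complex_root_conj hrc.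
  have hI' : 0 < Imc w^* by case: w hw hI hr => a b /= _ hb _; rewrite oppr_gt0.
  by move: (hup _ hI'); rewrite hr.
- by move: (hup _ hI); rewrite hw.
- case: (lerP (Rec w) 0) => hR; first by rewrite lecE hI eqxx.
  have hw0 : 0 < w by rewrite ltcE hI eqxx.
  have := nn_pos hnn p0 hw0; move/rootP: hw => ->; by rewrite ltxx.
Qed.

Lemma eval_prod_neq0 (s : seq R) z : 0 < Imc z ->
  (\prod_(x <- s) ('X + (x%:C)%:P)).[z] != 0.
Proof.
move=> hz; rewrite horner_prod prodf_seq_neq0; apply/allP => x _ /=.
by rewrite hornerD hornerX hornerC Im_neq0 // ImD ImR addr0 gt_eqF.
Qed.

Lemma LDz (s : seq R) z : 0 < Imc z ->
  (\prod_(x <- s) ('X + (x%:C)%:P))^`().[z] =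
  (\prod_(x <- s) ('X + (x%:C)%:P)).[z] * \sum_(x <- s) (z + x%:C)^-1.
Proof.
move=> hz; apply: LD => x _; by rewrite Im_neq0 // ImD ImR addr0 gt_eqF.
Qed.

Lemma Sx_neg (s : seq R) z : s != [::] -> 0 < Imc z ->
  Imc (\sum_(x <- s) (z + x%:C)^-1) < 0.
Proof.
case: s => [//|x s] _ hz; rewrite Im_sum big_cons.
have h1 := Im_invshift x hz.
have h2 : \sum_(y <- s) Imc ((z + y%:C)^-1) <= 0.
  by rewrite big_seq sumr_le0 // => y _; rewrite ltW // Im_invshift.
lra.
Qed.

Lemma GL_up (s : seq R) w : s != [::] -> 0 < Imc w ->
  (\prod_(x <- s) ('X + (x%:C)%:P))^`().[w] != 0.
Proof.
move=> hs hw; rewrite LDz // mulf_neq0 ?eval_prod_neq0 // Im_neq0 //.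
by rewrite lt_eqF // Sx_neg.
Qed.

Lemma Pplus_deriv (s : seq R) : all (fun x => 0 <= x) s -> s != [::] ->
  Pplus (\prod_(x <- s) ('X + (x%:C)%:P))^`().
Proof.
move=> hs s0; set g := \prod_(_ <- _) _.
have g0 : g^`() != 0.
  by apply: contraNneq (GL_up s0 (w := 'i) ltr01) => ->; rewrite horner0.
apply: bridge => //; apply: nonpos_roots => //.
- by apply: rc_deriv; apply: rc_prod.
- by apply: nn_deriv; apply: nn_prod.
- by move=> w hw; rewrite /root GL_up.
Qed.
End Core.

Section Up.
Variable R : rcfType.
Local Notation Imc := (@complex.Im R).
Local Notation Rec := (@complex.Re R).
Variables (th om pi : R).
Hypotheses (hth : 0 <= th) (hom : 0 <= om) (hpi : 0 <= pi).

Lemma Tp_eval f z : (Tp th om pi f).[z] =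
  (th%:C + om%:C * z) * f^`().[z] + z * f^`()^`().[z] + pi%:C * f.[z].
Proof. by rewrite /Tp /Delta derivnS derivn1 !hornerD !hornerM hornerD hornerZ !hornerC hornerX hornerZ. Qed.

Lemma sum_zero (s : seq R) z : z != 0 -> (forall y, y \in s -> y = 0) ->
  \sum_(y <- s) z * (z + y%:C)^-1 = (size s)%:R.
Proof.
move=> hz; elim: s => [|y s IH] hs; first by rewrite big_nil.
rewrite big_cons IH; last by move=> x hx; apply: hs; rewrite inE hx orbT.
rewrite (hs y (mem_head _ _)) rmorph0 addr0 mulfV //=.
by rewrite mulrS.
Qed.
Lemma Tg_up (s : seq R) z : all (fun x => 0 <= x) s -> s != [::] -> 0 < Imc z ->
  root (Tp th om pi (\prod_(x <- s) ('X + (x%:C)%:P))) z ->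
  Tp th om pi (\prod_(x <- s) ('X + (x%:C)%:P)) = 0.
Proof.
move=> hs s0 hz hr.
have [c [s' [hs' hg']]] := Pplus_deriv hs s0.
set g := \prod_(_ <- s) _ in hg' hr *.
set P := \prod_(_ <- s') _ in hg'.
set Sx := \sum_(x <- s) (z + x%:C)^-1.
set Sy := \sum_(y <- s') (z + y%:C)^-1.
have hgz : g.[z] != 0 := eval_prod_neq0 s hz.
have hg'z : g^`().[z] = g.[z] * Sx := LDz s hz.
have hSx : Imc Sx < 0 := Sx_neg s0 hz.
have Sx0 : Sx != 0 by rewrite Im_neq0 // lt_eqF.
have K0 : g^`().[z] != 0 by rewrite hg'z mulf_neq0.
have hPz : P^`().[z] = P.[z] * Sy := LDz s' hz.
have hg'' : g^`()^`().[z] = g^`().[z] * Sy by rewrite hg' derivZ !hornerZ hPz mulrA.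
have hgz' : g.[z] = g^`().[z] / Sx by rewrite hg'z mulfK.
have hE : th%:C + om%:C * z + z * Sy + pi%:C * Sx^-1 = 0.
  move/rootP: hr; rewrite Tp_eval hg'' hgz' => h.
  apply: (mulIf K0); rewrite mul0r -h; ring.
have hIm : om * Imc z + (\sum_(y <- s') (- y * Imc ((z + y%:C)^-1)))
           + pi * Imc (Sx^-1) = 0.
  have := congr1 Imc hE; rewrite !ImD ImR ImrM /Sy mulr_sumr Im_sum ImrM.
  rewrite add0r (_ : Imc 0 = 0) //.
  under eq_bigr => y _ do rewrite Im_zdiv //.
  move=> h; exact: h.
have t1 : 0 <= om * Imc z by apply: mulr_ge0 => //; exact: ltW.
have t2i : forall y, y \in s' -> 0 <= - y * Imc ((z + y%:C)^-1).
  move=> y hy; have hy0 : 0 <= y := allP hs' y hy.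
  by rewrite mulNr -mulrN mulr_ge0 // oppr_ge0; apply: ltW; exact: Im_invshift.
have t2 : 0 <= \sum_(y <- s') (- y * Imc ((z + y%:C)^-1)).
  by rewrite big_seq sumr_ge0.
have q0 : 0 < Imc Sx^-1 := Im_invneg hSx.
have t3 : 0 <= pi * Imc Sx^-1 by apply: mulr_ge0 => //; exact: ltW.
have e1 : om * Imc z = 0 by lra.
have e2 : \sum_(y <- s') (- y * Imc ((z + y%:C)^-1)) = 0 by lra.
have e3 : pi * Imc Sx^-1 = 0 by lra.
have om0 : om = 0 by move/eqP: e1; rewrite mulf_eq0 (gt_eqF hz) orbF => /eqP.
have pi0 : pi = 0 by move/eqP: e3; rewrite mulf_eq0 (gt_eqF q0) orbF => /eqP.
have y0 : forall y, y \in s' -> y = 0.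
  move=> y hy; move/eqP: e2; rewrite big_seq psumr_eq0; last exact: t2i.
  by move=> /allP /(_ y hy); rewrite hy /= mulf_eq0 oppr_eq0 (lt_eqF (Im_invshift y hz)) orbF => /eqP.
have hz0 : z != 0 by rewrite Im_neq0 // gt_eqF.
have h1 : th%:C + (size s')%:R = 0 :> R[i].
  by move: hE; rewrite om0 pi0 /Sy mulr_sumr sum_zero // rmorph0 !mul0r !addr0.
have : (th + (size s')%:R)%:C = 0%:C by rewrite rmorphD rmorph_nat rmorph0.
move/complexI => /eqP; rewrite paddr_eq0 // => /andP [/eqP th0].
rewrite pnatr_eq0 size_eq0 => /eqP s'0.
rewrite /P s'0 big_nil in hg'.
rewrite /Tp /Delta derivnS derivn1 hg' derivZ -polyC1 derivC scaler0 mulr0.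
by rewrite th0 om0 pi0 !rmorph0 !(scale0r, add0r, mul0r, addr0).
Qed.
End Up.

Section Fin.
Variable R : rcfType.
Local Notation Imc := (@complex.Im R).
Local Notation Rec := (@complex.Re R).
Variables (th om pi : R).
Hypotheses (hth : 0 <= th) (hom : 0 <= om) (hpi : 0 <= pi).

Lemma nn_Tp g : nn g -> nn (Tp th om pi g).
Proof.
move=> hg; rewrite /Tp /Delta derivnS derivn1.
apply: nnD; last by apply: nnZ => //; rewrite ler0c.
apply: nnD; last by apply: nnM; [apply: nnX | do 2 apply: nn_deriv].
apply: nnM; last by apply: nn_deriv.
by apply: nnD; [apply: nnC; rewrite ler0c | apply: nnZ; [rewrite ler0c | apply: nnX]].
Qed.

Lemma rc_Tp g : rc g -> rc (Tp th om pi g).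
Proof.
rewrite /rc => hg; rewrite /Tp /Delta derivnS derivn1.
rewrite !rmorphD !rmorphM /= rmorphD /= !map_polyZ map_polyX map_polyC /= -!deriv_map hg /= !oppr0.
done.
Qed.

Lemma TpZ c f : Tp th om pi (c *: f) = c *: Tp th om pi f.
Proof.
rewrite /Tp DeltaZ.
have -> : pi%:C *: (c *: f) = c *: (pi%:C *: f) by rewrite !scalerA mulrC.
by rewrite [RHS]scalerDr.
Qed.

Lemma Pplus_scale (c : R[i]) (p : {poly R[i]}) : Pplus p -> Pplus (c *: p).
Proof. by case=> c' [s [hs ->]]; exists (c * c'), s; rewrite scalerA. Qed.

Lemma Pplus0 : @Pplus R 0.
Proof. by exists 0, [::]; rewrite scale0r. Qed.

Lemma Tp_prod (s : seq R) : all (fun x => 0 <= x) s ->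
  Pplus (Tp th om pi (\prod_(x <- s) ('X + (x%:C)%:P))).
Proof.
move=> hs; case: (eqVneq s [::]) => [->|s0].
  rewrite big_nil /Tp /Delta derivnS derivn1 -polyC1 derivC derivC.
  rewrite !mulr0 !addr0 polyC1; exists (pi%:C), [::]; by rewrite big_nil add0r.
case: (eqVneq (Tp th om pi (\prod_(x <- s) ('X + (x%:C)%:P))) 0) => [->|T0].
  exact: Pplus0.
apply: bridge => //; apply: nonpos_roots => //.
- by apply: rc_Tp; apply: rc_prod.
- by apply: nn_Tp; apply: nn_prod.
- move=> w hw; apply/negP => hr; move/negP: T0; apply.
  by rewrite (Tg_up hth hom hpi hs s0 hw hr).
Qed.

Lemma Tp_Pplus f : Pplus f -> Pplus (Tp th om pi f).
Proof. by case=> c [s [hs ->]]; rewrite TpZ; apply: Pplus_scale; apply: Tp_prod. Qed.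
End Fin.


Unset Implicit Arguments.
Local Close Scope complex_scope.

Theorem lemma2 (R : rcfType) (theta omega : R) (phi f : {poly R[i]}) :
  0 <= theta -> 0 <= omega -> Pplus phi -> Pplus f ->
  Pplus (phiDelta theta omega phi f).
Proof.
move=> hth hom [c [s [hs ->]]] hf.
case: (eqVneq c 0) => [->|c0].
  by rewrite scale0r /phiDelta size_poly0 big_ord0; apply: Pplus0.
rewrite phiDelta_evn size_scale // evnZ -phiDelta_evn; apply: Pplus_scale.
elim: s hs f hf => [|x s IH] hs f hf.
  by rewrite big_nil phiDelta_evn size_poly1 evn1.
move: hs => /= /andP [hx hs].
rewrite big_cons mulrC ev_step; apply: IH => //.
exact: Tp_Pplus.
Qed.
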